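(* Let $f:\mathbb{R}^n\to\mathbb{R}$ be $\mathcal C^2$, $\mu$-strongly convex, with $L$-Lipschitz gradient and $\eta$-Lipschitz Hessian $\nabla^2 f$ (in operator norm). Let $k\ge1$, $C\ge1$, $x_0\in\mathbb{R}^n$, and $x_{i+1}=x_i-\frac1L\nabla f(x_i)$ for $i=0,\dots,k-1$. Define $\xi(x)=\frac1L\big(\nabla^2f(x_0)x-\nabla f(x)\big)$. Then $\xi$ is $\frac{\eta}{L^2}kC\|\nabla f(x_0)\|$-Lipschitz on the set $B_C=\{\sum_{i=0}^kc_ix_i : c\in\mathbb{R}^{k+1},\ \mathbf 1^Tc=1,\ \|c\|_1\le C\}$.
   Context: $\|\cdot\|$ is the Euclidean norm (operator norm for matrices), and $\|c\|_1=\sum_i|c_i|$. *)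

(* Defs.v *)
From HB Require Import structures.
From mathcomp Require Import all_boot all_order all_algebra.
From mathcomp Require Import all_classical all_reals all_analysis.
Set Implicit Arguments. Unset Strict Implicit. Unset Printing Implicit Defensive.
Import Order.TTheory GRing.Theory Num.Theory.
Import numFieldNormedType.Exports.
Local Open Scope classical_set_scope.
Local Open Scope ring_scope.

Definition enorm (R : realType) (n : nat) (v : 'rV[R]_n) : R :=
  Num.sqrt (\sum_(i < n) v ord0 i ^+ 2).

(* Operator norm (w.r.t. the Euclidean norm) of A acting on column vectors
   x |-> A x; written with rows: (A x)^T = x^T A^T. *)
Definition opnorm (R : realType) (n : nat) (A : 'M[R]_n) : R :=
  sup [set r | exists v : 'rV[R]_n, enorm v <= 1 /\ r = enorm (v *m A^T)].

Definition dotp (R : realType) (n : nat) (u v : 'rV[R]_n) : R :=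
  \sum_(i < n) u ord0 i * v ord0 i.

Definition is_gradient (R : realType) (n : nat)
  (f : 'rV[R]_n -> R) (g : 'rV[R]_n -> 'rV[R]_n) : Prop :=
  forall x, differentiable f x /\ forall v, 'd f x v = dotp (g x) v.

(* H is the Hessian of f, i.e. the derivative of the gradient g:
   dg(x)[v] = H(x) v  (as a column), i.e. v *m H(x)^T as a row. *)
Definition is_hessian (R : realType) (n : nat)
  (g : 'rV[R]_n -> 'rV[R]_n) (H : 'rV[R]_n -> 'M[R]_n) : Prop :=
  forall x, differentiable g x /\ forall v, 'd g x v = v *m (H x)^T.

Definition strongly_convex (R : realType) (n : nat) (mu : R)
  (f : 'rV[R]_n -> R) : Prop :=
  0 < mu /\
  forall (x y : 'rV[R]_n) (t : R), 0 <= t -> t <= 1 ->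
    f (t *: x + (1 - t) *: y) <=
      t * f x + (1 - t) * f y - mu / 2 * t * (1 - t) * enorm (x - y) ^+ 2.

Definition xi (R : realType) (n : nat) (L : R) (g : 'rV[R]_n -> 'rV[R]_n)
  (H0 : 'M[R]_n) (x : 'rV[R]_n) : 'rV[R]_n :=
  L^-1 *: (x *m H0^T - g x).

Definition BC (R : realType) (n k : nat) (C : R) (xs : nat -> 'rV[R]_n)
  : set 'rV[R]_n :=
  [set y | exists c : 'rV[R]_k.+1,
     \sum_(i < k.+1) c ord0 i = 1 /\
     \sum_(i < k.+1) `|c ord0 i| <= C /\
     y = \sum_(i < k.+1) c ord0 i *: xs i].

(* Main.v *)
Require Import Defs.
From HB Require Import structures.
From mathcomp Require Import all_boot all_order all_algebra.
From mathcomp Require Import all_classical all_reals all_analysis.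
From mathcomp Require Import ring lra.
Import Order.TTheory GRing.Theory Num.Theory.
Import numFieldNormedType.Exports.
Local Open Scope classical_set_scope.
Local Open Scope ring_scope.
Set Implicit Arguments. Unset Strict Implicit.



Section Basics.
Variables (R : realType) (n : nat).
Implicit Types (u v w : 'rV[R]_n) (a b : R).

Lemma dotpC u v : dotp u v = dotp v u.
Proof. by apply: eq_bigr => i _; rewrite mulrC. Qed.
Lemma dotpDr u v w : dotp u (v + w) = dotp u v + dotp u w.
Proof. by rewrite /dotp -big_split; apply: eq_bigr => i _; rewrite mxE mulrDr. Qed.
Lemma dotpZr u a v : dotp u (a *: v) = a * dotp u v.
Proof. by rewrite /dotp mulr_sumr; apply: eq_bigr => i _; rewrite mxE mulrCA. Qed.
Lemma dotpNr u v : dotp u (- v) = - dotp u v.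
Proof. by rewrite -scaleN1r dotpZr mulN1r. Qed.
Lemma dotpBr u v w : dotp u (v - w) = dotp u v - dotp u w.
Proof. by rewrite dotpDr dotpNr. Qed.
Lemma dotpDl u v w : dotp (v + w) u = dotp v u + dotp w u.
Proof. by rewrite dotpC dotpDr !(dotpC u). Qed.
Lemma dotpZl u a v : dotp (a *: v) u = a * dotp v u.
Proof. by rewrite dotpC dotpZr dotpC. Qed.
Lemma dotpNl u v : dotp (- v) u = - dotp v u.
Proof. by rewrite dotpC dotpNr dotpC. Qed.
Lemma dotpBl u v w : dotp (v - w) u = dotp v u - dotp w u.
Proof. by rewrite dotpDl dotpNl. Qed.
Lemma dotp_ge0 v : 0 <= dotp v v.
Proof. by apply: sumr_ge0 => i _; rewrite -expr2 sqr_ge0. Qed.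
Lemma enorm_ge0 v : 0 <= enorm v.
Proof. exact: sqrtr_ge0. Qed.
Lemma enorm_sq v : enorm v ^+ 2 = dotp v v.
Proof.
rewrite /enorm sqr_sqrtr; first by apply: eq_bigr => i _; rewrite expr2.
by apply: sumr_ge0 => i _; rewrite sqr_ge0.
Qed.
Lemma enormE v : enorm v = Num.sqrt (dotp v v).
Proof. by rewrite -enorm_sq sqrtr_sqr ger0_norm ?enorm_ge0. Qed.

Lemma CS u v : dotp u v <= enorm u * enorm v.
Proof.
set a := enorm v; set b := enorm u.
have ha : 0 <= a by apply: enorm_ge0.
have hb : 0 <= b by apply: enorm_ge0.
have h := dotp_ge0 (a *: u - b *: v).
rewrite !(dotpBl, dotpBr, dotpZl, dotpZr) -!enorm_sq -/a -/b (dotpC v u) in h.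
have h2 : 0 <= 2 * (a * b) * (a * b - dotp u v) by nra.
have [ab0|abpos] := eqVneq (a * b) 0.
  move: ab0 => /eqP; rewrite mulf_eq0 => /orP [] /eqP a0.
  - have : dotp v v = 0 by rewrite -enorm_sq -/a a0 expr0n.
    move=> vv0.
    have v0 : v = 0.
      apply/matrixP => i j; rewrite ord1 mxE.
      move: vv0 => /eqP; rewrite psumr_eq0 => [/allP H|k _]; last by rewrite -expr2 sqr_ge0.
      by apply/eqP; rewrite -sqrf_eq0 expr2; apply/eqP/eqP/H; rewrite mem_index_enum.
    suff -> : dotp u v = 0 by rewrite mulr_ge0.
    by rewrite v0 /dotp big1 // => i _; rewrite mxE mulr0.
  - have : dotp u u = 0 by rewrite -enorm_sq -/b a0 expr0n.
    move=> vv0.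
    have v0 : u = 0.
      apply/matrixP => i j; rewrite ord1 mxE.
      move: vv0 => /eqP; rewrite psumr_eq0 => [/allP H|k _]; last by rewrite -expr2 sqr_ge0.
      by apply/eqP; rewrite -sqrf_eq0 expr2; apply/eqP/eqP/H; rewrite mem_index_enum.
    suff -> : dotp u v = 0 by rewrite mulr_ge0.
    by rewrite v0 /dotp big1 // => i _; rewrite mxE mul0r.
have abp : 0 < a * b by rewrite lt_neqAle eq_sym abpos mulr_ge0.
move: h2; rewrite pmulr_rge0; last by apply: mulr_gt0. move=> h3; by rewrite mulrC -subr_ge0.
Qed.

Lemma CSabs u v : `|dotp u v| <= enorm u * enorm v.
Proof.
rewrite ler_norml CS andbT -(opprK (dotp u v)) lerN2 -dotpNl.
by apply: le_trans (CS _ _) _; rewrite /enorm; under eq_bigr do rewrite mxE sqrrN.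
Qed.

Lemma enormN v : enorm (- v) = enorm v.
Proof. by rewrite !enormE dotpNl dotpNr opprK. Qed.
Lemma enormZ a v : enorm (a *: v) = `|a| * enorm v.
Proof.
by rewrite !enormE dotpZl dotpZr mulrA sqrtrM ?sqr_ge0 ?dotp_ge0 // -expr2 sqrtr_sqr.
Qed.
Lemma enormD u v : enorm (u + v) <= enorm u + enorm v.
Proof.
rewrite -(ler_pXn2r (_ : (0 < 2)%N)) ?nnegrE ?addr_ge0 ?enorm_ge0 //.
rewrite enorm_sq dotpDl !dotpDr (dotpC v u) sqrrD -!enorm_sq.
have := CS u v; lra.
Qed.
Lemma enormB u v : enorm (u - v) = enorm (v - u).
Proof. by rewrite -enormN opprB. Qed.
Lemma enorm0 : enorm (0 : 'rV[R]_n) = 0.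
Proof. by rewrite -(scale0r 0) enormZ normr0 mul0r. Qed.

Lemma enorm_sum (I : Type) (r : seq I) (P : pred I) (F : I -> 'rV[R]_n) :
  enorm (\sum_(i <- r | P i) F i) <= \sum_(i <- r | P i) enorm (F i).
Proof.
elim/big_rec2: _ => [|i y1 y2 _ h]; first by rewrite enorm0.
by apply: le_trans (enormD _ _) _; rewrite lerD2l.
Qed.
End Basics.



Section Op.
Variables (R : realType) (n : nat).
Implicit Types (u v w : 'rV[R]_n) (A : 'M[R]_n).

Lemma mx_bound A : exists M, 0 <= M /\ forall v, enorm (v *m A^T) <= M * enorm v.
Proof.
pose S := \sum_(j < n) enorm (row j A) ^+ 2.
have S0 : 0 <= S by apply: sumr_ge0 => j _; apply: sqr_ge0.
exists (Num.sqrt S); split; first exact: sqrtr_ge0.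
move=> v.
rewrite -(ler_pXn2r (_ : (0 < 2)%N)) ?nnegrE ?mulr_ge0 ?sqrtr_ge0 ?enorm_ge0 //.
rewrite exprMn (sqr_sqrtr S0) [enorm (v *m _) ^+ 2]enorm_sq /S mulr_suml /dotp.
apply: ler_sum => j _.
rewrite -expr2.
have -> : (v *m A^T) ord0 j = dotp v (row j A).
  by rewrite mxE; apply: eq_bigr => i _; rewrite !mxE.
rewrite -exprMn mulrC -[dotp v _ ^+ 2]real_normK ?num_real //.
by rewrite ler_sqr ?nnegrE ?normr_ge0 ?mulr_ge0 ?enorm_ge0 // CSabs.
Qed.

Let Eset A := [set r | exists v : 'rV[R]_n, enorm v <= 1 /\ r = enorm (v *m A^T)].

Lemma Eset_ub A : has_ubound (Eset A).
Proof.
have [M [M0 HM]] := mx_bound A.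
exists M => r [v [v1 ->]].
apply: le_trans (HM v) _; rewrite -{2}(mulr1 M); exact: ler_wpM2l.
Qed.

Lemma Eset_0 A : Eset A 0.
Proof. by exists 0; rewrite mul0mx enorm0; split. Qed.

Lemma opnorm_ge0 A : 0 <= opnorm A.
Proof. exact: (ub_le_sup (Eset_ub A) (Eset_0 A)). Qed.

Lemma opnorm_le A v : enorm (v *m A^T) <= opnorm A * enorm v.
Proof.
have [M [M0 HM]] := mx_bound A.
have [v0|vpos] := eqVneq (enorm v) 0.
  by apply: le_trans (HM v) _; rewrite v0 !mulr0.
have vp : 0 < enorm v by rewrite lt_neqAle eq_sym vpos enorm_ge0.
set u := (enorm v)^-1 *: v.
have u1 : enorm u <= 1.
  by rewrite /u enormZ ger0_norm ?invr_ge0 ?enorm_ge0 // mulVf.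
have := ub_le_sup (Eset_ub A) (ex_intro _ u (conj u1 erefl)).
rewrite -/(opnorm A) /u -scalemxAl enormZ ger0_norm ?invr_ge0 ?enorm_ge0 //.
by rewrite ler_pdivrMl // mulrC.
Qed.
End Op.



Section An.
Variables (R : realType) (n : nat).
Implicit Types (u v w x : 'rV[R]_n).

Lemma line_is_derive (W : normedModType R) (h : 'rV[R]_n -> W) x v (t : R) :
  differentiable h (x + t *: v) ->
  is_derive t 1 (fun s : R => h (x + s *: v)) ('d h (x + t *: v) v).
Proof.
move=> dh.
pose l := (cst x : R -> 'rV[R]_n) + (fun s : R => s *: v).
have Hd : is_diff t l ((0 : R -> 'rV[R]_n) + ( *:%R^~ v)).
  exact: (is_diffD (is_diff_cst x t) (is_diff_scalel t v)).
have dl : differentiable l t := @ex_diff _ _ _ _ _ _ _ Hd.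
have e : 'd l t 1 = v.
  rewrite (@diff_val _ _ _ _ _ _ _ Hd).
  by rewrite /= add0r scale1r.
have hc : (fun s : R => h (x + s *: v)) = h \o l by [].
have dc : differentiable (h \o l) t.
  have dh' : differentiable h (l t) := dh.
  exact: (@differentiable_comp _ _ _ _ l h t dl dh').
apply: DeriveDef.
  by rewrite hc; apply: diff_derivable.
rewrite hc (@deriveE _ _ _ (h \o l) t 1 dc).
have dh' : differentiable h (l t) := dh.
by rewrite (diff_comp dl dh') /= e.
Qed.
End An.

Section An2.
Variables (R : realType) (n : nat).
Implicit Types (u v w x D : 'rV[R]_n).

Lemma phi_f (f : 'rV[R]_n -> R) g x v (t : R) : is_gradient f g ->
  is_derive t 1 (fun s : R => f (x + s *: v)) (dotp (g (x + t *: v)) v).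
Proof.
move=> Hg; have [df dv] := Hg (x + t *: v).
have := @line_is_derive R n _ _ _ _ _ df; rewrite dv; exact.
Qed.

Lemma phi_g g H x v D (t : R) : is_hessian g H ->
  is_derive t 1 (fun s : R => dotp D (g (x + s *: v)))
    (dotp D (v *m (H (x + t *: v))^T)).
Proof.
move=> Hh; have [dg dv] := Hh (x + t *: v).
have G := @line_is_derive R n _ _ _ _ _ dg.
have dG : derivable (fun s : R => g (x + s *: v)) t 1 := @ex_derive _ _ _ _ _ _ _ G.
have comp i : is_derive t 1 (fun s : R => g (x + s *: v) ord0 i) ((v *m (H (x + t *: v))^T) ord0 i).
  apply: DeriveDef; first by move/derivable_mxP: dG; apply.
  have := derive_mx dG; rewrite (@derive_val _ _ _ _ _ _ _ G) dv => /matrixP /(_ ord0 i).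
  by move=> ->; rewrite mxE.
have S := @is_derive_sum _ _ _ n (fun i => D ord0 i \*: (fun s : R => g (x + s *: v) ord0 i)) t 1
  (fun i => D ord0 i *: (v *m (H (x + t *: v))^T) ord0 i) (fun i => is_deriveZ _ (comp i)).
have -> : (fun s : R => dotp D (g (x + s *: v))) =
  \sum_(i < n) (D ord0 i \*: (fun s : R => g (x + s *: v) ord0 i)).
  rewrite fct_sumE; apply/funext => s; rewrite /dotp.
  by apply: eq_bigr.
apply: is_derive_eq S _.
by rewrite /dotp; apply: eq_bigr.
Qed.
End An2.



Lemma mvt_all (R : realType) (phi dphi : R -> R) (a b : R) : a < b ->
  (forall s : R, is_derive s 1 phi (dphi s)) ->
  exists2 c, c \in `]a, b[ & phi b - phi a = dphi c * (b - a).
Proof.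
move=> ab hd; apply: MVT => //.
apply: derivable_within_continuous => s _.
exact: (@ex_derive _ _ _ _ _ _ _ (hd s)).
Qed.

Lemma lim_aux (R : realType) (A B K : R) : 0 <= K ->
  (forall s, 0 < s -> s <= 1/2 -> A - K * s <= B) -> A <= B.
Proof.
move=> K0 h; rewrite leNgt; apply/negP => AB.
have e0 : 0 < A - B by rewrite subr_gt0.
have K1 : 0 < 2 * (K + 1) by lra.
case: (lerP ((A - B) / (2 * (K + 1))) (1/2)) => hs.
- have s0 : 0 < (A - B) / (2 * (K + 1)) by rewrite divr_gt0.
  have := h _ s0 hs.
  have eq : K * ((A - B) / (2 * (K + 1))) + (A - B) / (2 * (K + 1)) = (A - B) / 2.
    by field; lra.
  lra.
- rewrite ltr_pdivlMr // in hs.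
  have h2 : 0 < 1 / 2 :> R by lra.
  have := h (1/2) h2 (lexx _).
  lra.
Qed.

Section Conv.
Variables (R : realType) (n : nat) (f : 'rV[R]_n -> R) (g : 'rV[R]_n -> 'rV[R]_n) (mu L : R).
Hypothesis Hg : is_gradient f g.
Hypothesis Hmu : strongly_convex mu f.
Hypothesis HL : forall x y, enorm (g x - g y) <= L * enorm (x - y).
Hypothesis L0 : 0 <= L.

Lemma gdiff_up x v (c : R) : 0 <= c ->
  dotp (g (x + c *: v)) v <= dotp (g x) v + L * c * enorm v ^+ 2.
Proof.
move=> c0.
have : dotp (g (x + c *: v) - g x) v <= L * c * enorm v ^+ 2.
  apply: le_trans (CS _ _) _.
  apply: le_trans (ler_wpM2r (enorm_ge0 _) (HL _ _)) _.
  by rewrite addrC addKr enormZ ger0_norm // expr2 !mulrA.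
rewrite dotpBl; lra.
Qed.

Lemma gdiff_lo x v (c : R) : 0 <= c ->
  dotp (g x) v - L * c * enorm v ^+ 2 <= dotp (g (x + c *: v)) v.
Proof.
move=> c0.
have : dotp (g x - g (x + c *: v)) v <= L * c * enorm v ^+ 2.
  apply: le_trans (CS _ _) _.
  apply: le_trans (ler_wpM2r (enorm_ge0 _) (HL _ _)) _.
  by rewrite opprD addrA subrr sub0r enormN enormZ ger0_norm // expr2 !mulrA.
rewrite dotpBl; lra.
Qed.

Lemma descent x v : f (x + v) <= f x + dotp (g x) v + L * enorm v ^+ 2.
Proof.
have [c /andP[c0 c1] e] := @mvt_all R (fun s => f (x + s *: v)) (fun s => dotp (g (x + s *: v)) v) 0 1 ltr01
  (fun s => phi_f x v s Hg).
rewrite /= scale1r scale0r addr0 subr0 mulr1 in e.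
have := gdiff_up x v (ltW c0).
have : L * c * enorm v ^+ 2 <= L * enorm v ^+ 2.
  by rewrite ler_wpM2r ?sqr_ge0 // -{2}(mulr1 L) ler_wpM2l // ltW.
lra.
Qed.

Lemma first_order x v : f x + dotp (g x) v + mu / 4 * enorm v ^+ 2 <= f (x + v).
Proof.
have [mu0 Hc] := Hmu.
suff : dotp (g x) v <= f (x + v) - f x - mu / 4 * enorm v ^+ 2 by lra.
apply: (@lim_aux _ _ _ (L * enorm v ^+ 2)); first by rewrite mulr_ge0 ?sqr_ge0.
move=> s s0 s12.
have [c /andP[c0 c1] e] := @mvt_all R (fun s => f (x + s *: v)) (fun s => dotp (g (x + s *: v)) v) 0 s s0
  (fun s => phi_f x v s Hg).
rewrite /= scale0r addr0 subr0 in e.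
have s1 : s <= 1 by lra.
have hc := Hc (x + v) x s (ltW s0) s1.
have E1 : s *: (x + v) + (1 - s) *: x = x + s *: v.
  by rewrite scalerDr scalerBl scale1r addrC addrA subrK addrC.
have E2 : x + v - x = v by rewrite addrC addKr.
rewrite E1 E2 in hc.
have gl := gdiff_lo x v (ltW c0).
have cs : L * c * enorm v ^+ 2 <= L * s * enorm v ^+ 2.
  by rewrite ler_wpM2r ?sqr_ge0 // ler_wpM2l // ltW.
set d := dotp (g (x + c *: v)) v in e gl.
set Q := f (x + v) - f x - mu / 2 * (1 - s) * enorm v ^+ 2.
have h1 : s * d <= s * Q.
  have : s * Q = s * f (x + v) + (1 - s) * f x - mu / 2 * s * (1 - s) * enorm v ^+ 2 - f x.
    by rewrite /Q; ring.
  rewrite mulrC; lra.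
rewrite ler_pM2l // in h1.
have pE : 0 <= mu * enorm v ^+ 2 by rewrite mulr_ge0 ?sqr_ge0 // ltW.
have : mu / 4 * enorm v ^+ 2 <= mu / 2 * (1 - s) * enorm v ^+ 2.
  rewrite -subr_ge0.
  have -> : mu / 2 * (1 - s) * enorm v ^+ 2 - mu / 4 * enorm v ^+ 2 = (mu * enorm v ^+ 2) * (1 / 2 - s) / 2 by field.
  by rewrite mulr_ge0 // mulr_ge0 // subr_ge0.
rewrite /Q in h1.
have : L * s * enorm v ^+ 2 = L * enorm v ^+ 2 * s by ring.
lra.
Qed.
End Conv.

Section Coco.
Variables (R : realType) (n : nat) (f : 'rV[R]_n -> R) (g : 'rV[R]_n -> 'rV[R]_n) (mu L : R).
Hypothesis Hg : is_gradient f g.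
Hypothesis Hmu : strongly_convex mu f.
Hypothesis HL : forall x y, enorm (g x - g y) <= L * enorm (x - y).
Hypothesis Lp : 0 < L.

Lemma half_coco x z :
  f x + dotp (g x) (z - x) + (4 * L)^-1 * enorm (g z - g x) ^+ 2 <= f z.
Proof.
have L0 : 0 <= L := ltW Lp.
have [mu0 _] := Hmu.
set d := g z - g x; set k := (2 * L)^-1.
set p := z - k *: d.
have h1 := first_order Hg Hmu HL L0 x (p - x).
have h2 := descent Hg HL L0 z (p - z).
have ex : x + (p - x) = p by rewrite addrC subrK.
have ez : z + (p - z) = p by rewrite addrC subrK.
rewrite ex in h1; rewrite ez in h2.
have e1 : p - z = - (k *: d) by rewrite /p addrAC subrr add0r.
have e2 : p - x = (z - x) - k *: d by rewrite /p addrAC.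
rewrite e1 enormN enormZ dotpNr dotpZr exprMn enorm_sq in h2.
rewrite e2 dotpBr dotpZr in h1.
rewrite enorm_sq.
have m0 : 0 <= mu / 4 * enorm (z - x - k *: d) ^+ 2 by rewrite mulr_ge0 ?sqr_ge0 ?divr_ge0 // ltW.
have kk : `|k| ^+ 2 = k ^+ 2 by rewrite real_normK ?num_real.
rewrite kk in h2.
have BA : k * dotp (g z) d - k * dotp (g x) d = k * dotp d d by rewrite -mulrBr -dotpBl.
have q1 : L * (k ^+ 2 * dotp d d) = (4 * L)^-1 * dotp d d.
  rewrite /k. field. exact: lt0r_neq0.
have q2 : k * dotp d d = 2 * ((4 * L)^-1 * dotp d d) by rewrite /k; field; exact: lt0r_neq0.
lra.
Qed.

Lemma grad_decr x : enorm (g (x - L^-1 *: g x)) <= enorm (g x).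
Proof.
set y := x - L^-1 *: g x.
have h1 := half_coco x y.
have h2 := half_coco y x.
have e1 : y - x = - (L^-1 *: g x) by rewrite /y addrAC subrr add0r.
have e2 : x - y = L^-1 *: g x by rewrite /y opprB addrC subrK.
rewrite e1 dotpNr dotpZr !enorm_sq !dotpBl !dotpBr in h1.
rewrite e2 dotpZr !enorm_sq !dotpBl !dotpBr in h2.
rewrite (dotpC (g y) (g x)) in h1 h2.
have q : (4 * L)^-1 = L^-1 / 4 by field; exact: lt0r_neq0.
rewrite q in h1 h2.
have key : L^-1 * dotp (g y) (g y) <= L^-1 * dotp (g x) (g x) by lra.
rewrite ler_pM2l ?invr_gt0 // in key.
rewrite -(ler_pXn2r (_ : (0 < 2)%N)) ?nnegrE ?enorm_ge0 //.
by rewrite !enorm_sq.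
Qed.
End Coco.



Lemma enorm_one (R : realType) (n : nat) : (0 < n)%N ->
  0 < enorm (const_mx 1 : 'rV[R]_n).
Proof.
move=> n0; rewrite /enorm sqrtr_gt0.
under eq_bigr do rewrite mxE expr1n.
by rewrite sumr_const card_ord ltr0n.
Qed.

Lemma L_pos (R : realType) (n : nat) (f : 'rV[R]_n -> R) g mu L :
  (0 < n)%N -> is_gradient f g -> strongly_convex mu f ->
  (forall x y, enorm (g x - g y) <= L * enorm (x - y)) -> 0 < L.
Proof.
move=> n0 Hg Hmu HL.
set v := (const_mx 1 : 'rV[R]_n).
have vp := enorm_one R n0.
have L0 : 0 <= L.
  have := HL v 0; rewrite subr0 => h.
  have := le_trans (enorm_ge0 _) h.
  by rewrite pmulr_lge0.
have [mu0 _] := Hmu.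
have h1 := first_order Hg Hmu HL L0 0 v.
have h2 := descent Hg HL L0 0 v.
have : mu / 4 * enorm v ^+ 2 <= L * enorm v ^+ 2 by lra.
rewrite ler_pM2r ?exprn_gt0 // => h.
apply: lt_le_trans h; rewrite divr_gt0 //.
Qed.

Lemma iterates (R : realType) (n : nat) (f : 'rV[R]_n -> R) g mu L (k : nat) (xs : nat -> 'rV[R]_n) :
  is_gradient f g -> strongly_convex mu f ->
  (forall x y, enorm (g x - g y) <= L * enorm (x - y)) -> 0 < L ->
  (forall i, (i < k)%N -> xs i.+1 = xs i - L^-1 *: g (xs i)) ->
  forall i, (i <= k)%N ->
    enorm (g (xs i)) <= enorm (g (xs 0%N)) /\
    enorm (xs i - xs 0%N) <= i%:R * L^-1 * enorm (g (xs 0%N)).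
Proof.
move=> Hg Hmu HL Lp Hs; elim => [|i IH] ik.
  by rewrite subrr enorm0 mul0r mul0r.
have ik' : (i < k)%N := ik.
have [IH1 IH2] := IH (ltnW ik).
rewrite (Hs i ik'); split.
  exact: le_trans (grad_decr Hg Hmu HL Lp _) IH1.
rewrite addrAC.
apply: le_trans (enormD _ _) _.
have Li : 0 <= L^-1 by rewrite invr_ge0 ltW.
rewrite enormN enormZ ger0_norm //.
have : L^-1 * enorm (g (xs i)) <= L^-1 * enorm (g (xs 0%N)).
  by rewrite ler_pM2l ?invr_gt0.
rewrite -natr1 !mulrDl mul1r; lra.
Qed.

Lemma BC_bound (R : realType) (n : nat) (f : 'rV[R]_n -> R) g mu L C (k : nat) (xs : nat -> 'rV[R]_n) :
  is_gradient f g -> strongly_convex mu f ->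
  (forall x y, enorm (g x - g y) <= L * enorm (x - y)) -> 0 < L ->
  (forall i, (i < k)%N -> xs i.+1 = xs i - L^-1 *: g (xs i)) ->
  forall y, BC k C xs y ->
  enorm (y - xs 0%N) <= C * (k%:R * L^-1 * enorm (g (xs 0%N))).
Proof.
move=> Hg Hmu HL Lp Hs y [c [c1 [cC ->]]].
set r := k%:R * L^-1 * enorm (g (xs 0%N)).
have E : \sum_(i < k.+1) c ord0 i *: (xs i - xs 0%N) =
    \sum_(i < k.+1) c ord0 i *: xs i - (\sum_(i < k.+1) c ord0 i) *: xs 0%N.
  by rewrite scaler_suml -sumrB; apply: eq_bigr => i _; rewrite scalerBr.
rewrite c1 scale1r in E; rewrite -E.
apply: le_trans (enorm_sum _ _ _) _.
have Li : 0 <= L^-1 by rewrite invr_ge0 ltW.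
have r0 : 0 <= r by rewrite mulr_ge0 ?mulr_ge0 ?enorm_ge0.
apply: le_trans (_ : \sum_(i < k.+1) `|c ord0 i| * r <= _).
  apply: ler_sum => i _; rewrite enormZ ler_wpM2l //.
  have [_ h] := iterates Hg Hmu HL Lp Hs (ltn_ord i : (i <= k)%N).
  apply: le_trans h _; rewrite /r -!mulrA ler_wpM2r ?mulr_ge0 ?enorm_ge0 //.
  by rewrite ler_nat -ltnS.
by rewrite -mulr_suml ler_wpM2r.
Qed.

Unset Implicit Arguments.
Theorem lemma4 (R : realType) (n : nat) (f : 'rV[R]_n -> R)
  (g : 'rV[R]_n -> 'rV[R]_n) (H : 'rV[R]_n -> 'M[R]_n)
  (mu L eta C : R) (k : nat) (xs : nat -> 'rV[R]_n) :
  is_gradient f g ->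
  is_hessian g H ->
  continuous H ->
  strongly_convex mu f ->
  (forall x y, enorm (g x - g y) <= L * enorm (x - y)) ->
  (forall x y, opnorm (H x - H y) <= eta * enorm (x - y)) ->
  (1 <= k)%N -> 1 <= C ->
  (forall i, (i < k)%N -> xs i.+1 = xs i - L^-1 *: g (xs i)) ->
  forall y z, BC k C xs y -> BC k C xs z ->
    enorm (xi L g (H (xs 0%N)) y - xi L g (H (xs 0%N)) z)
      <= eta / L ^+ 2 * k%:R * C * enorm (g (xs 0%N)) * enorm (y - z).
Proof.
move=> Hg Hh Hc Hmu HL Heta k1 C1 Hs y z By Bz.
have [n0|npos] := posnP n.
  subst n; by rewrite /enorm !big_ord0 sqrtr0 mulr0.
have Lp := L_pos npos Hg Hmu HL.
have Li : 0 <= L^-1 by rewrite invr_ge0 ltW.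
have eta0 : 0 <= eta.
  set v := (const_mx 1 : 'rV[R]_n).
  have := le_trans (opnorm_ge0 _) (Heta v 0).
  by rewrite subr0 pmulr_lge0 // enorm_one.
have hy := BC_bound Hg Hmu HL Lp Hs By.
have hz := BC_bound Hg Hmu HL Lp Hs Bz.
set x0 := xs 0%N.
set H0 := H x0.
set rho := C * (k%:R * L^-1 * enorm (g x0)).
have rho0 : 0 <= rho by rewrite mulr_ge0 ?mulr_ge0 ?enorm_ge0 // (le_trans ler01 C1).
set d := y - z.
set D := xi L g H0 y - xi L g H0 z.
set a := dotp D (z *m H0^T).
set b := dotp D (d *m H0^T).
pose psi := (cst a + (fun s : R => s * b)) - (fun s : R => dotp D (g (z + s *: d))).
have dpsi : forall s : R, is_derive s 1 psi (b - dotp D (d *m (H (z + s *: d))^T)).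
  move=> s.
  have h1 : is_derive s 1 (fun s : R => s * b) b.
    have := is_deriveZ b (is_derive_id s (1 : R)).
    have -> : b \*: id = (fun s : R => s * b) by apply/funext => t /=; rewrite mulrC.
    by move=> h; apply: is_derive_eq h _; rewrite /GRing.scale /= mulr1.
  have h2 := is_deriveD (is_derive_cst a s 1) h1.
  rewrite add0r in h2.
  exact: is_deriveB h2 (phi_g z d D s Hh).
have [c /andP[c0' c1'] e] := mvt_all ltr01 dpsi.
have c0 : 0 < c := c0'. have c1 : c < 1 := c1'. clear c0' c1'.
have ev : forall s, psi s = a + s * b - dotp D (g (z + s *: d)) by [].
rewrite subr0 mulr1 !ev in e.
have zy : z + 1 *: d = y by rewrite scale1r /d addrC subrK.
have z0 : z + 0 *: d = z by rewrite scale0r addr0.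
rewrite zy z0 mul1r mul0r addr0 in e.
have LD : dotp D (L *: D) = b - dotp D (g y) + dotp D (g z).
  have -> : L *: D = (y *m H0^T - g y) - (z *m H0^T - g z).
    by rewrite /D /xi -scalerBr scalerA mulfV ?scale1r // lt0r_neq0.
  rewrite /b /d mulmxBl !dotpBr; lra.
set w := z + c *: d.
have hw : enorm (w - x0) <= rho.
  have -> : w - x0 = c *: (y - x0) + (1 - c) *: (z - x0).
    by apply/matrixP => i j; rewrite /w /d !mxE; ring.
  apply: le_trans (enormD _ _) _.
  have c2 : 0 <= 1 - c by lra.
  rewrite !enormZ (ger0_norm (ltW c0)) (ger0_norm c2).
  have := ler_wpM2l (ltW c0) hy; have := ler_wpM2l c2 hz.
  rewrite /rho /x0; lra.
have hder : b - dotp D (d *m (H w)^T) <= enorm D * (eta * rho * enorm d).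
  have -> : b - dotp D (d *m (H w)^T) = dotp D (d *m (H0 - H w)^T).
    rewrite /b -dotpBr -mulmxBr; congr (dotp D (d *m _)).
    by apply/matrixP => i j; rewrite !mxE.
  apply: le_trans (CS _ _) _; rewrite ler_wpM2l ?enorm_ge0 //.
  apply: le_trans (opnorm_le _ _) _.
  apply: ler_wpM2r; first exact: enorm_ge0.
  apply: le_trans (Heta _ _) _; apply: ler_wpM2l => //.
  by rewrite enormB.
have key : L * enorm D ^+ 2 <= enorm D * (eta * rho * enorm d).
  rewrite enorm_sq -dotpZr LD; rewrite -/w in e; lra.
have M0 : 0 <= eta * rho * enorm d.
  by apply: mulr_ge0; [apply: mulr_ge0 | apply: enorm_ge0].
have -> : eta / L ^+ 2 * k%:R * C * enorm (g x0) * enorm d = eta * rho * enorm d / L.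
  by rewrite /rho; field; exact: lt0r_neq0.
have [D0|Dp] := eqVneq (enorm D) 0.
  rewrite D0 divr_ge0 //; exact: ltW Lp.
have Dpos : 0 < enorm D by rewrite lt_neqAle eq_sym Dp enorm_ge0.
rewrite ler_pdivlMr // mulrC.
move: key; rewrite expr2 mulrA [enorm D * (_ * _ * _)]mulrC ler_pM2r //.
Qed.
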